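(* Let $G$ be a connected graph and let $H$ be a hypergraph of degree 2. If $G$ is a minor of $H^d$, then $G^d$ is a hypergraph dilution of $H$.
   Context: A hypergraph $H$ is a pair $(V(H),E(H))$ with $E(H)\subseteq 2^{V(H)}$ a set; graphs are hypergraphs all of whose edges have size 2. For a vertex $v$, $I_v$ is the set of edges containing $v$; the degree of $H$ is $\max_v |I_v|$. The dual $H^d$ of $H$ has $V(H^d)=E(H)$ and $E(H^d)=\{I_v : v\in V(H)\}$. A graph $G$ is a minor of a hypergraph $F$ if it is a minor of the primal graph of $F$ (vertices $V(F)$, with $x,y$ adjacent iff some edge of $F$ contains both), i.e., there is $\mu: V(G)\to 2^{V(F)}$ with each $\mu(v)$ connected, the $\mu(v)$ pairwise disjoint, and for adjacent $u,v$ in $G$ some primal edge joins $\mu(u)$ and $\mu(v)$. $H$ is a hypergraph dilution of $H'$ if $H$ is isomorphic to a hypergraph reachable from $H'$ by a finite sequence of: deleting a vertex (from the vertex set and all edges); deleting an edge that is a proper subset of another edge; merging on a vertex $v$, i.e., replacing all edges of $I_v$ by the single edge $(\bigcup I_v)\setminus\{v\}$. *)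

(* Defs.v *)
From mathcomp Require Import all_boot.
Set Implicit Arguments. Unset Strict Implicit. Unset Printing Implicit Defensive.

Record hypergraph (T : finType) := Hypergraph { hV : {set T}; hE : {set {set T}} }.

Definition wf (T : finType) (H : hypergraph T) : Prop :=
  forall e, e \in hE H -> e \subset hV H.

Definition incid (T : finType) (H : hypergraph T) (v : T) : {set {set T}} :=
  [set e in hE H | v \in e].

Definition degree (T : finType) (H : hypergraph T) : nat :=
  \max_(v in hV H) #|incid H v|.

Definition is_graph (T : finType) (H : hypergraph T) : Prop :=
  wf H /\ forall e, e \in hE H -> #|e| = 2.

Definition dual (T : finType) (H : hypergraph T) : hypergraph {set T} :=
  Hypergraph (hE H) [set incid H v | v in hV H].

Definition primal_adj (T : finType) (H : hypergraph T) : rel T :=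
  fun x y => (x != y) && [exists e in hE H, (x \in e) && (y \in e)].

Definition connected_set (T : finType) (H : hypergraph T) (X : {set T}) : Prop :=
  X != set0 /\
  forall x y, x \in X -> y \in X ->
    connect (fun a b => [&& a \in X, b \in X & primal_adj H a b]) x y.

Definition connected (T : finType) (H : hypergraph T) : Prop :=
  connected_set H (hV H).

Definition minor (T U : finType) (G : hypergraph T) (F : hypergraph U) : Prop :=
  exists mu : T -> {set U},
    [/\ forall v, v \in hV G -> mu v \subset hV F,
        forall v, v \in hV G -> connected_set F (mu v),
        forall u v, u \in hV G -> v \in hV G -> u != v -> [disjoint mu u & mu v] &
        forall u v, u \in hV G -> v \in hV G -> primal_adj G u v ->
          exists x y, [/\ x \in mu u, y \in mu v & primal_adj F x y]].

Inductive dil_step (T : finType) : hypergraph T -> hypergraph T -> Prop :=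
| DelVertex (H : hypergraph T) (v : T) : v \in hV H ->
    dil_step H (Hypergraph (hV H :\ v) [set e :\ v | e in hE H])
| DelEdge (H : hypergraph T) (e f : {set T}) : e \in hE H -> f \in hE H -> e \proper f ->
    dil_step H (Hypergraph (hV H) (hE H :\ e))
| Merge (H : hypergraph T) (v : T) : v \in hV H ->
    dil_step H (Hypergraph (hV H)
      ((hE H :\: incid H v) :|: [set (\bigcup_(e in incid H v) e) :\ v])).

Inductive dil_reach (T : finType) : hypergraph T -> hypergraph T -> Prop :=
| DR_refl (H : hypergraph T) : dil_reach H H
| DR_step (H1 H2 H3 : hypergraph T) : dil_step H1 H2 -> dil_reach H2 H3 -> dil_reach H1 H3.

Definition iso (T U : finType) (H1 : hypergraph T) (H2 : hypergraph U) : Prop :=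
  exists f : T -> U,
    [/\ {in hV H1 &, injective f}, f @: hV H1 = hV H2 &
        [set f @: (e : {set T}) | e in hE H1] = hE H2].

Definition dilution (T U : finType) (H' : hypergraph U) (H : hypergraph T) : Prop :=
  exists H'' : hypergraph T, dil_reach H H'' /\ iso H'' H'.

(* Main.v *)
Require Import Defs.
From mathcomp Require Import all_boot.
Set Implicit Arguments. Unset Strict Implicit. Unset Printing Implicit Defensive.

Lemma dil_reach_trans (T : finType) (A B C : hypergraph T) :
  dil_reach A B -> dil_reach B C -> dil_reach A C.
Proof. elim=> [//| H1 H2 H3 s _ IH] /IH; exact: DR_step. Qed.

Lemma dil_reach1 (T : finType) (A B : hypergraph T) : dil_step A B -> dil_reach A B.
Proof. move=> s; exact: DR_step s (DR_refl _). Qed.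

Definition Fw (U : finType) (W : {set U}) (g : {set {set U}}) : {set U} :=
  (\bigcup_(e in g) e) :&: W.
Definition hyp (U : finType) (W : {set U}) (P : {set {set {set U}}}) : hypergraph U :=
  Hypergraph W [set Fw W g | g in P].

Lemma FwD1 (U : finType) (W : {set U}) x g : Fw (W :\ x) g = Fw W g :\ x.
Proof.
apply/setP=> y; rewrite /Fw !inE.
by case: (y \in \bigcup_(e in g) e); case: (y != x); case: (y \in W).
Qed.

Lemma del_step (U : finType) (W : {set U}) P x : x \in W ->
  dil_step (hyp W P) (hyp (W :\ x) P).
Proof.
move=> xW.
have -> : hyp (W :\ x) P = Hypergraph (hV (hyp W P) :\ x) [set e :\ x | e in hE (hyp W P)].
  rewrite /hyp /=; congr Hypergraph; rewrite -imset_comp; apply: eq_imset => g /=.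
  exact: FwD1.
exact: DelVertex.
Qed.

Definition Px (U : finType) (W : {set U}) (P : {set {set {set U}}}) x :=
  [set g in P | x \in Fw W g].
Definition mergeP (U : finType) (W : {set U}) P (x : U) :=
  (P :\: Px W P x) :|: [set \bigcup_(g in Px W P x) g].

Lemma merge_reach (U : finType) (W : {set U}) P x : x \in W ->
  dil_reach (hyp W P) (hyp (W :\ x) (mergeP W P x)).
Proof.
move=> xW.
apply: DR_step (Merge (H := hyp W P) xW) _.
apply: dil_reach1.
set H1 := Hypergraph _ _.
have -> : hyp (W :\ x) (mergeP W P x) = Hypergraph (hV H1 :\ x) [set e :\ x | e in hE H1].
2: exact: DelVertex.
rewrite /hyp /H1 /=; congr Hypergraph.
rewrite /mergeP !imsetU !imset_set1; congr (_ :|: [set _]).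
- apply/setP=> E; apply/imsetP/imsetP.
  + case=> g; rewrite inE => /andP [gnP gP] ->.
    exists (Fw W g); last by rewrite FwD1.
    have xg : x \notin Fw W g by move: gnP; rewrite inE gP.
    rewrite inE; apply/andP; split; last by apply/imsetP; exists g.
    by rewrite /incid inE negb_and xg orbT.
  + case=> E'; rewrite inE => /andP [h /imsetP [g gP Eg]] ->.
    exists g; last by rewrite Eg FwD1.
    rewrite inE gP andbT inE gP /=; move: h; rewrite /incid inE negb_and Eg /=.
    case/orP => // /negP []; by apply/imsetP; exists g.
- rewrite FwD1; apply/setP=> y; rewrite !inE; case: (y != x) => //=.
  apply/idP/idP.
  + move=> /andP [/bigcupP [e /bigcupP [g gPx eg] ye] yW].
    move: gPx; rewrite inE => /andP [gP xg].
    apply/bigcupP; exists (Fw W g).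
      by rewrite inE xg andbT; apply/imsetP; exists g.
    by rewrite /Fw inE yW andbT; apply/bigcupP; exists e.
  + case/bigcupP=> E; rewrite inE => /andP [/imsetP [g gP ->] xg].
    rewrite /Fw inE => /andP [/bigcupP [e eg ye] yW].
    rewrite yW andbT; apply/bigcupP; exists e => //.
    by apply/bigcupP; exists g => //; rewrite inE gP.
Qed.

Definition stepf (U : finType) (intl : pred U) (K : {set U})
  (st : {set U} * {set {set {set U}}}) (x : U) :=
  let: (W, P) := st in
  if intl x then (W :\ x, mergeP W P x)
  else if x \in K then (W, P) else (W :\ x, P).

Definition process (U : finType) (intl : pred U) (K : {set U}) s st :=
  foldl (@stepf U intl K) st s.

Lemma process_reach (U : finType) (intl : pred U) (K : {set U}) (s : seq U) :
  forall (W : {set U}) (P : {set {set {set U}}}), uniq s -> {subset s <= W} ->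
  dil_reach (hyp W P) (hyp (process intl K s (W, P)).1 (process intl K s (W, P)).2).
Proof.
elim: s => [|x s IH] W P /=; first by move=> *; exact: DR_refl.
case/andP=> xs us sW.
have xW : x \in W by apply: sW; rewrite inE eqxx.
have sW' : {subset s <= W :\ x}.
  move=> y ys; rewrite inE sW ?inE ?ys ?orbT // andbT.
  by apply/eqP=> yx; move: xs; rewrite -yx ys.
rewrite /process /=; case: (intl x).
  apply: dil_reach_trans (merge_reach P xW) _; exact: IH.
case: (x \in K).
  apply: IH => // y ys; apply: sW; rewrite inE ys orbT //.
apply: DR_step (del_step P xW) _; exact: IH.
Qed.

Lemma process_W (U : finType) (intl : pred U) (K : {set U}) (s : seq U) :
  forall (W : {set U}) (P : {set {set {set U}}}), uniq s ->
  (process intl K s (W, P)).1 = W :\: [set y | (y \in s) && (intl y || (y \notin K))].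
Proof.
elim: s => [|x s IH] W P /=.
  by move=> _; apply/setP=> y; rewrite !inE.
case/andP=> xs us; rewrite /process /=.
case ix: (intl x); [|case kx: (x \in K)]; rewrite IH //; apply/setP=> y;
  rewrite !inE; case: (eqVneq y x) => [->|] //=; rewrite ?ix ?kx //= (negbTE xs) //.
Qed.

Definition invP (T U : finType) (VG : {set T}) (EH : {set {set U}})
  (mu : T -> {set {set U}}) (P : {set {set {set U}}}) : Prop :=
 [/\ forall g, g \in P -> g \subset EH,
     forall e, e \in EH -> exists2 g, g \in P & e \in g,
     forall g1 g2 e, g1 \in P -> g2 \in P -> e \in g1 -> e \in g2 -> g1 = g2 &
     forall g e f, g \in P -> e \in g -> f \in g ->
        e = f \/ exists2 u, u \in VG & (e \in mu u) && (f \in mu u)].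

Definition sg (U : finType) (P : {set {set {set U}}}) (a b : {set U}) :=
  exists2 g, g \in P & (a \in g) && (b \in g).

Lemma in_mergeP (U : finType) (W : {set U}) P x g :
  (g \in mergeP W P x) = (g == \bigcup_(g' in Px W P x) g') || ((g \in P) && (x \notin Fw W g)).
Proof.
rewrite /mergeP in_setU in_set1 in_setD orbC; congr (_ || _).
by rewrite inE andbC; case: (g \in P).
Qed.

Lemma sg_merge (U : finType) (W : {set U}) P x a b :
  sg P a b -> sg (mergeP W P x) a b.
Proof.
case=> g gP /andP [ag bg].
case xg: (x \in Fw W g).
  exists (\bigcup_(g' in Px W P x) g'); first by rewrite in_mergeP eqxx.
  by apply/andP; split; apply/bigcupP; exists g => //; rewrite inE gP xg.
by exists g; [rewrite in_mergeP gP xg orbT | rewrite ag bg].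
Qed.

Lemma sg_merge_new (T U : finType) (VG : {set T}) (EH : {set {set U}}) (mu : T -> {set {set U}}) (W : {set U}) P x a b :
  invP VG EH mu P -> x \in W -> a \in EH -> b \in EH -> x \in a -> x \in b ->
  sg (mergeP W P x) a b.
Proof.
case=> _ cov _ _ xW aE bE xa xb.
exists (\bigcup_(g' in Px W P x) g'); first by rewrite in_mergeP eqxx.
have H c : c \in EH -> x \in c -> c \in \bigcup_(g' in Px W P x) g'.
  move=> cE xc; case: (cov c cE) => g gP cg.
  apply/bigcupP; exists g => //; rewrite inE gP /Fw inE xW andbT.
  by apply/bigcupP; exists c.
by rewrite !H.
Qed.

Lemma inv_merge (T U : finType) (VG : {set T}) (EH : {set {set U}}) (mu : T -> {set {set U}}) (W : {set U}) P x :
  (forall u v e, u \in VG -> v \in VG -> e \in mu u -> e \in mu v -> u = v) ->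
  (exists2 u0, u0 \in VG & forall e, e \in EH -> x \in e -> e \in mu u0) ->
  invP VG EH mu P -> invP VG EH mu (mergeP W P x).
Proof.
move=> mud [u0 u0G intx] [sub cov dis hom].
have inPx g e : g \in Px W P x -> e \in g -> e \in mu u0.
  rewrite inE => /andP [gP]; rewrite /Fw inE => /andP [/bigcupP [e1 e1g xe1] _] eg.
  have e1u : e1 \in mu u0 by apply: intx => //; exact: (subsetP (sub g gP)).
  case: (hom g e e1 gP eg e1g) => [-> //|[v vG /andP [ev e1v]]].
  by rewrite (mud u0 v e1 u0G vG e1u e1v).
split.
- move=> g; rewrite in_mergeP => /orP [/eqP ->|/andP [gP _]]; last exact: sub.
  apply/subsetP=> e /bigcupP [g' g'P eg']; move: g'P; rewrite inE => /andP [g'P _].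
  exact: (subsetP (sub g' g'P)).
- move=> e eE; case: (cov e eE) => g gP eg.
  case xg: (x \in Fw W g).
    exists (\bigcup_(g' in Px W P x) g'); first by rewrite in_mergeP eqxx.
    by apply/bigcupP; exists g => //; rewrite inE gP xg.
  by exists g => //; rewrite in_mergeP gP xg orbT.
- have key g1 g2 e : (g1 == \bigcup_(g' in Px W P x) g') -> (g2 \in P) && (x \notin Fw W g2) ->
     e \in g1 -> e \in g2 -> False.
    move=> /eqP -> /andP [g2P xg2] /bigcupP [g gPx eg] eg2.
    move: (gPx); rewrite inE => /andP [gP xg].
    by move: xg2; rewrite -(dis g g2 e gP g2P eg eg2) xg.
  move=> g1 g2 e; rewrite !in_mergeP => /orP [h1|h1] /orP [h2|h2] e1 e2.
  + by rewrite (eqP h1) (eqP h2).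
  + by case: (key g1 g2 e h1 h2 e1 e2).
  + by case: (key g2 g1 e h2 h1 e2 e1).
  + by case/andP: h1 => g1P _; case/andP: h2 => g2P _; exact: (dis g1 g2 e).
- move=> g e f; rewrite in_mergeP => /orP [/eqP ->|/andP [gP _]]; last exact: hom.
  move=> /bigcupP [g1 g1P eg1] /bigcupP [g2 g2P fg2].
  right; exists u0 => //; by rewrite (inPx g1 e) ?(inPx g2 f).
Qed.

Lemma process_inv (T U : finType) (VG : {set T}) (EH : {set {set U}})
  (mu : T -> {set {set U}}) (intl : pred U) (K : {set U}) :
  (forall u v e, u \in VG -> v \in VG -> e \in mu u -> e \in mu v -> u = v) ->
  (forall y, intl y -> exists2 u0, u0 \in VG & forall e, e \in EH -> y \in e -> e \in mu u0) ->
  forall (s : seq U) (W : {set U}) (P : {set {set {set U}}}),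
  uniq s -> {subset s <= W} -> invP VG EH mu P ->
  [/\ invP VG EH mu (process intl K s (W, P)).2,
      (forall a b, sg P a b -> sg (process intl K s (W, P)).2 a b) &
      (forall y a b, y \in s -> intl y -> a \in EH -> b \in EH -> y \in a -> y \in b ->
          sg (process intl K s (W, P)).2 a b)].
Proof.
move=> mud hint; elim=> [|x s IH] W P /=; first by move=> _ _ iP; split.
case/andP=> xs us sW iP.
have xW : x \in W by apply: sW; rewrite inE eqxx.
have sW' : {subset s <= W :\ x}.
  move=> y ys; rewrite inE sW ?inE ?ys ?orbT // andbT.
  by apply/eqP=> yx; move: xs; rewrite -yx ys.
have sW'' : {subset s <= W} by move=> y ys; apply: sW; rewrite inE ys orbT.
rewrite /process /=; case ix: (intl x).
  have iP' := inv_merge W (x:=x) mud (hint x ix) iP.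
  case: (IH (W :\ x) (mergeP W P x) us sW' iP') => i1 i2 i3; split => //.
    by move=> a b h; apply: i2; apply: sg_merge.
  move=> y a b; rewrite inE => /orP [/eqP ->|ys] iy aE bE ya yb; last exact: (i3 y a b ys iy aE bE ya yb).
  by apply: i2; apply: (sg_merge_new iP xW).
have gen (W' : {set U}) : {subset s <= W'} ->
  [/\ invP VG EH mu (foldl (stepf intl K) (W', P) s).2,
      (forall a b, sg P a b -> sg (foldl (stepf intl K) (W', P) s).2 a b) &
      (forall y a b, y \in x :: s -> intl y -> a \in EH -> b \in EH -> y \in a -> y \in b ->
          sg (foldl (stepf intl K) (W', P) s).2 a b)].
  move=> sW'''; case: (IH W' P us sW''' iP) => i1 i2 i3; split => //.
  move=> y a b; rewrite inE => /orP [/eqP ->|ys]; last exact: i3.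
  by rewrite ix.
by case: (x \in K); apply: gen.
Qed.

Lemma hyp_init (U : finType) (H : hypergraph U) : wf H ->
  hyp (hV H) [set [set e] | e in hE H] = H.
Proof.
move=> wfH; case: H wfH => V E wfH; rewrite /hyp /=; congr Hypergraph.
rewrite -imset_comp -[RHS]imset_id; apply: eq_in_imset => e eE /=.
rewrite /Fw big_set1; apply/setIidPl; exact: wfH.
Qed.

Lemma inv_init (T U : finType) (VG : {set T}) (EH : {set {set U}}) (mu : T -> {set {set U}}) :
  invP VG EH mu [set [set e] | e in EH].
Proof.
split.
- by move=> g /imsetP [e eE ->]; rewrite sub1set.
- by move=> e eE; exists [set e]; [apply/imsetP; exists e | rewrite inE].
- move=> g1 g2 e /imsetP [e1 _ ->] /imsetP [e2 _ ->]; rewrite !inE => /eqP -> /eqP -> //.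
- move=> g e f /imsetP [e1 _ ->]; rewrite !inE => /eqP -> /eqP ->; by left.
Qed.

Theorem lemma4p3 (T U : finType) (G : hypergraph T) (H : hypergraph U) :
  is_graph G -> connected G ->
  wf H -> degree H = 2 ->
  minor G (dual H) ->
  dilution (dual G) H.
Proof.
move=> [wfG G2] [VGn Gconn] wfH degH [mu [muV muC muD muA]].
have muE v : v \in hV G -> mu v \subset hE H by move=> vG; exact: muV.
have mud u v e : u \in hV G -> v \in hV G -> e \in mu u -> e \in mu v -> u = v.
  move=> uG vG eu ev; apply/eqP; apply/negPn/negP => uv.
  by move: (disjointFr (muD u v uG vG uv) eu); rewrite ev.
have deg2 z : z \in hV H -> #|incid H z| <= 2.
  move=> zH; rewrite -degH; rewrite /degree; exact: leq_bigmax_cond.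
have inc2 z a b : z \in hV H -> a != b -> a \in incid H z -> b \in incid H z ->
    incid H z = [set a; b].
  move=> zH ab az bz; apply/eqP; rewrite eq_sym eqEcard cards2 ab.
  rewrite (leq_trans (deg2 z zH)) // andbT.
  by apply/subsetP => c /set2P [] ->.
pose intl := fun z : U => [exists u in hV G, incid H z \subset mu u].
pose fz := fun z : U => [set v in hV G | [exists e in mu v, z \in e]].
pose kp := fun (e : {set T}) (z : U) => [&& z \in hV H, fz z == e &
   [forall e' in incid H z, [exists u in hV G, e' \in mu u]]].
pose K := [set z | [exists e in hE G, [pick z' | kp e z'] == Some z]].
have kex e : e \in hE G -> exists z, kp e z.
  move=> eG; have /cards2P [u [w [uw ee]]] : #|e| == 2 by rewrite G2.
  have uG : u \in hV G by apply: (subsetP (wfG e eG)); rewrite ee !inE eqxx.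
  have wG : w \in hV G by apply: (subsetP (wfG e eG)); rewrite ee !inE eqxx orbT.
  have adj : primal_adj G u w.
    by rewrite /primal_adj uw /=; apply/existsP; exists e; rewrite eG ee !inE !eqxx orbT.
  case: (muA u w uG wG adj) => x [y [xu yw]].
  rewrite /primal_adj /= => /andP [xy /existsP [I /andP [/imsetP [z zH ->] /andP [xz yz]]]].
  have iz := inc2 z x y zH xy xz yz.
  have zx : z \in x by move: xz; rewrite inE => /andP [].
  have zy : z \in y by move: yz; rewrite inE => /andP [].
  exists z; rewrite /kp zH /=; apply/andP; split.
  - apply/eqP/setP => v; rewrite ee !inE; apply/idP/idP.
    + case/andP=> vG /existsP [e' /andP [e'v ze']].
      have : e' \in incid H z by rewrite inE (subsetP (muE v vG)) ?e'v.
      rewrite iz !inE => /orP [] /eqP ee'.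
        by rewrite (mud v u x vG uG) ?eqxx // -ee'.
      by rewrite (mud v w y vG wG) ?eqxx ?orbT // -ee'.
    + case/orP => /eqP ->.
        by rewrite uG; apply/existsP; exists x; rewrite xu.
      by rewrite wG; apply/existsP; exists y; rewrite yw.
  - apply/forallP => e'; apply/implyP; rewrite iz => /set2P [] ->; apply/existsP.
      by exists u; rewrite uG xu.
    by exists w; rewrite wG yw.
have pkp e z : [pick z' | kp e z'] = Some z -> kp e z.
  by case: pickP => // z' kz' [<-].
have Kk z : z \in K -> exists2 e, e \in hE G & [pick z' | kp e z'] = Some z.
  by rewrite inE => /existsP [e /andP [eG /eqP pk]]; exists e.
have Kin e : e \in hE G -> exists2 z, z \in K & kp e z.
  move=> eG; case pk: [pick z | kp e z] => [z|].
    exists z; last exact: pkp.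
    by rewrite /K inE; apply/existsP; exists e; rewrite eG; apply/eqP.
  case: (kex e eG) => z kz; move: pk; case: pickP => [z' _ //| /(_ z)].
  by rewrite kz.
have kpf e z : kp e z -> fz z = e by case/and3P => _ /eqP.
have nIK z : z \in K -> ~~ intl z.
  move=> /Kk [e eG /pkp /and3P [zH /eqP fze _]]; rewrite /intl; apply/negP => /existsP [u0 /andP [u0G sub]].
  have : fz z \subset [set u0].
    apply/subsetP => v; rewrite /fz inE => /andP [vG /existsP [e' /andP [e'v ze']]].
    rewrite inE; apply/eqP; apply: (mud v u0 e' vG u0G e'v); apply: (subsetP sub).
    by rewrite inE ze' (subsetP (muE v vG)).
  by move/subset_leq_card; rewrite cards1 fze G2.
have hint y : intl y -> exists2 u0, u0 \in hV G &
    forall e, e \in hE H -> y \in e -> e \in mu u0.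
  rewrite /intl => /existsP [u0 /andP [u0G sub]]; exists u0 => // e eE ye.
  by apply: (subsetP sub); rewrite inE eE ye.
have sH : {subset enum (hV H) <= hV H} by move=> y; rewrite mem_enum.
have R := @process_reach U intl K (enum (hV H)) (hV H) [set [set e] | e in hE H] (enum_uniq (hV H)) sH.
have [iP sgP sgI] := @process_inv T U (hV G) (hE H) mu intl K mud hint (enum (hV H)) (hV H) [set [set e] | e in hE H] (enum_uniq (hV H)) sH
  (inv_init (hV G) (hE H) mu).
have WK := @process_W U intl K (enum (hV H)) (hV H) [set [set e] | e in hE H] (enum_uniq (hV H)).
rewrite hyp_init // in R.
set Pf := (process intl K (enum (hV H)) (hV H, [set [set e] | e in hE H])).2 in R iP sgP sgI.
set Wf := (process intl K (enum (hV H)) (hV H, [set [set e] | e in hE H])).1 in R WK.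
have WfK : Wf = K.
  rewrite WK; apply/setP => y; rewrite in_setD in_set mem_enum.
  case yK: (y \in K).
    case: (Kk y yK) => e _ /pkp /and3P [yH _ _].
    by rewrite yH (negbTE (nIK y yK)).
  by rewrite /= orbT andbT andNb.
case: iP => subP covP disP homP.
have sgmu u a b : u \in hV G -> a \in mu u -> b \in mu u -> sg Pf a b.
  move=> uG au bu; case: (muC u uG) => _ /(_ a b au bu) /connectP [p pth ->] {bu}.
  elim: p a au pth => [|c p IH] a au /=.
    case: (covP a (subsetP (muE u uG) a au)) => g gP ag _.
    by exists g; rewrite ?ag.
  case/andP => /and3P [_ cu]; rewrite /primal_adj /=.
  case/andP => [ac /existsP [I /andP [/imsetP [z zH ->] /andP [az cz]]]] pth.
  have aE : a \in hE H by move: az; rewrite inE => /andP [].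
  have cE : c \in hE H by move: cz; rewrite inE => /andP [].
  have za : z \in a by move: az; rewrite inE => /andP [].
  have zc : z \in c by move: cz; rewrite inE => /andP [].
  have sac : sg Pf a c.
    apply: (sgI z) => //; first by rewrite mem_enum.
    rewrite /intl; apply/existsP; exists u; rewrite uG (inc2 z a c zH ac az cz) /=.
    by apply/subsetP => e' /set2P [] ->.
  have scb := IH c cu pth.
  case: sac => g1 g1P /andP [ag1 cg1]; case: scb => g2 g2P /andP [cg2 bg2].
  by exists g1 => //; rewrite ag1 (disP g1 g2 c g1P g2P cg1 cg2).
have muP u : u \in hV G -> mu u \in Pf.
  move=> uG; case: (muC u uG) => /set0Pn [a au] _.
  have aE := subsetP (muE u uG) a au.
  case: (covP a aE) => g gP ag.
  suff <- : g = mu u by [].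
  apply/setP => f; apply/idP/idP.
    move=> fg; case: (homP g f a gP fg ag) => [-> //|[v vG /andP [fv av]]].
    by rewrite (mud u v a uG vG au av).
  move=> fu; case: (sgmu u a f uG au fu) => g' g'P /andP [ag' fg'].
  by rewrite (disP g g' a gP g'P ag ag').
set Ef := [set Fw K g | g in Pf].
set B := [set Fw K (mu u) | u in hV G].
have BE : B \subset Ef.
  apply/subsetP => b /imsetP [u uG ->]; apply/imsetP; exists (mu u) => //; exact: muP.
have EB b : b \in Ef -> b != set0 -> b \in B.
  move=> /imsetP [g gP ->] /set0Pn [z]; rewrite /Fw inE => /andP [/bigcupP [e' e'g ze'] zK].
  case: (Kk z zK) => e0 _ /pkp /and3P [_ _ /forallP /(_ e') /implyP].
  have e'E : e' \in hE H by exact: (subsetP (subP g gP)).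
  have h : e' \in incid H z by rewrite inE e'E ze'.
  move=> /(_ h) /existsP [u /andP [uG e'u]].
  apply/imsetP; exists u => //.
  by rewrite (disP g (mu u) e' gP (muP u uG) e'g e'u).
have RB : dil_reach (Hypergraph K Ef) (Hypergraph K B).
  case: (boolP ((set0 \in Ef) && (set0 \notin B))) => [/andP [e0 nB] | h].
    case/set0Pn: VGn => u uG.
    have bB : Fw K (mu u) \in B by apply/imsetP; exists u.
    have bn : Fw K (mu u) != set0.
      by apply/negP => /eqP h0; move: nB; rewrite -h0 bB.
    have -> : B = Ef :\ set0.
      apply/setP => b; rewrite in_setD1; apply/idP/idP.
        move=> bB'; rewrite (subsetP BE b bB') andbT.
        by apply/negP => /eqP b0; move: nB; rewrite -b0 bB'.
      by case/andP => bn' bE; exact: EB.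
    apply: dil_reach1.
    apply: (DelEdge (H := Hypergraph K Ef) (f := Fw K (mu u)) e0 (subsetP BE _ bB)); by rewrite proper0.
  have -> : Ef = B.
    apply/setP => b; apply/idP/idP; last exact: (subsetP BE).
    move=> bE; case: (eqVneq b set0) => [b0|bn]; last exact: EB.
    by move: h; rewrite -b0 bE /= negbK; subst b.
  exact: DR_refl.
exists (Hypergraph K B); split.
  apply: dil_reach_trans R _; rewrite /hyp WfK; exact: RB.
exists fz; rewrite /=; split.
- move=> z1 z2 /Kk [e1 e1G pk1] /Kk [e2 e2G pk2].
  rewrite (kpf _ _ (pkp _ _ pk1)) (kpf _ _ (pkp _ _ pk2)) => e12.
  by move: pk1; rewrite e12 pk2 => -[].
- apply/setP => e; apply/imsetP/idP.
    by case=> z /Kk [e0 e0G /pkp /kpf ->] ->.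
  by move=> eG; case: (Kin e eG) => z zK /kpf fze; exists z.
- rewrite /B -imset_comp; apply: eq_in_imset => u uG /=.
  apply/setP => e; rewrite inE; apply/imsetP/andP.
    case=> z; rewrite /Fw inE => /andP [/bigcupP [e' e'u ze'] zK] ->.
    case: (Kk z zK) => e0 e0G /pkp /kpf fze; split; first by rewrite fze.
    by rewrite /fz inE uG; apply/existsP; exists e'; rewrite e'u.
  case=> eG ue; case: (Kin e eG) => z zK /kpf fze; exists z => //.
  rewrite /Fw inE zK andbT; move: ue; rewrite -fze /fz inE uG /= => /existsP [e' /andP [e'u ze']].
  by apply/bigcupP; exists e'.
Qed.
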